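(* Let $X\sim P_X$ on $\mathcal{X}$, let $(\Omega_k^\star)_{k=1}^K$ be a measurable partition of $\mathcal{X}$ up to null sets with measurable $f_k^\star$, $\mu=\sum_k\mathbf{1}_{\Omega_k^\star}f_k^\star$, $|\mu(X)|\le B$ a.s. (and $Y=\mu(X)+\xi$, $\mathbb{E}[\xi\mid X]=0$, $\mathbb{E}\xi^2<\infty$). Let experts satisfy $\sup_{k,x}|f_k(x;\theta_k)|\le B_{\mathrm{stu}}$ for all parameters considered. Fix $k$, $\varepsilon\in(0,1/2)$, $\tau>0$ and set $A_{k,\varepsilon}=\Omega_k^\star\cap\mathcal{G}_\varepsilon(\tau;\phi)\cap\{x:p_k^{(\tau)}(x;\phi)\ge1-\varepsilon\}$. Then \[\mathbb{E}\big[(\mu(X)-h_{\theta,\phi,\tau}(X))^2\mathbf{1}_{A_{k,\varepsilon}}(X)\big]\ge\tfrac12\mathbb{E}\big[|f_k(X;\theta_k)-f_k^\star(X)|^2\mathbf{1}_{A_{k,\varepsilon}}(X)\big]-4B_{\mathrm{stu}}^2\varepsilon^2P_X(A_{k,\varepsilon}).\]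
   Context: $p_k^{(\tau)}(x;\phi)=e^{a_k(x;\phi)/\tau}/\sum_je^{a_j(x;\phi)/\tau}$ for router logits $a_k(\cdot;\phi)$; $h_{\theta,\phi,\tau}=\sum_kp_k^{(\tau)}f_k(\cdot;\theta_k)$; $\mathcal{G}_\varepsilon(\tau;\phi)=\{x:\max_jp_j^{(\tau)}(x;\phi)>1-\varepsilon\}$. *)

(* Defs.v *)
From HB Require Import structures.
From mathcomp Require Import all_boot all_order all_algebra.
From mathcomp Require Import all_classical all_reals all_analysis.
Set Implicit Arguments. Unset Strict Implicit. Unset Printing Implicit Defensive.
Import Order.TTheory GRing.Theory Num.Theory.
Local Open Scope classical_set_scope.
Local Open Scope ring_scope.

Definition softmax_gate (R : realType) (T : Type) (K : nat) (Phi : Type)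
  (a : 'I_K -> Phi -> T -> R) (tau : R) (phi : Phi) (k : 'I_K) (x : T) : R :=
  expR (a k phi x / tau) / \sum_(j < K) expR (a j phi x / tau).

Definition moe (R : realType) (T : Type) (K : nat) (Theta Phi : Type)
  (f : 'I_K -> Theta -> T -> R) (theta : 'I_K -> Theta)
  (a : 'I_K -> Phi -> T -> R) (tau : R) (phi : Phi) (x : T) : R :=
  \sum_(k < K) softmax_gate a tau phi k x * f k (theta k) x.

Definition confident_set (R : realType) (T : Type) (K : nat) (Phi : Type)
  (a : 'I_K -> Phi -> T -> R) (tau : R) (phi : Phi) (eps : R) : set T :=
  [set x | exists j : 'I_K, 1 - eps < softmax_gate a tau phi j x].

Definition piecewise_target (R : realType) (T : Type) (K : nat)
  (Omega : 'I_K -> set T) (fstar : 'I_K -> T -> R) (x : T) : R :=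
  \sum_(k < K) (\1_(Omega k) x) * fstar k x.

(* Main.v *)
Require Import Defs.
From HB Require Import structures.
From mathcomp Require Import all_boot all_order all_algebra.
From mathcomp Require Import all_classical all_reals all_analysis.
From mathcomp Require Import measurable_realfun.
From mathcomp Require Import ring lra.
Import Order.TTheory GRing.Theory Num.Theory.
Local Open Scope classical_set_scope.
Local Open Scope ring_scope.

Theorem mainTheorem10
  (R : realType) (d : measure_display) (T : measurableType d)
  (P : probability T R) (K : nat)
  (Omega : 'I_K -> set T) (fstar : 'I_K -> T -> R) (B : R)
  (Theta Phi : Type) (f : 'I_K -> Theta -> T -> R) (a : 'I_K -> Phi -> T -> R)
  (Bstu : R) (theta : 'I_K -> Theta) (phi : Phi)
  (k : 'I_K) (eps tau : R) :
  (forall j, measurable (Omega j)) ->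
  (forall i j, i != j -> P.-negligible (Omega i `&` Omega j)) ->
  P.-negligible (~` \bigcup_(j in [set: 'I_K]) Omega j) ->
  (forall j, measurable_fun setT (fstar j)) ->
  (forall j th, measurable_fun setT (f j th)) ->
  (forall j ph, measurable_fun setT (a j ph)) ->
  {ae P, forall x, `|piecewise_target Omega fstar x| <= B} ->
  (forall j th x, `|f j th x| <= Bstu) ->
  0 < eps -> eps < 2^-1 -> 0 < tau ->
  let A := Omega k `&` confident_set a tau phi eps
           `&` [set x | 1 - eps <= softmax_gate a tau phi k x] in
  let mu := piecewise_target Omega fstar in
  let h := moe f theta a tau phi in
  (\int[P]_(x in A) ((mu x - h x) ^+ 2)%:E >=
     (2^-1)%:E * \int[P]_(x in A) ((`|f k (theta k) x - fstar k x|) ^+ 2)%:E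
     - (4 * Bstu ^+ 2 * eps ^+ 2)%:E * P A)%E.
Proof.
move=> mO negO _ mfs mf ma _ fB e0 e2 t0.
cbv zeta.
set A := (Omega k `&` _ `&` _).
set mu := piecewise_target Omega fstar.
set h := moe f theta a tau phi.
set p := softmax_gate a tau phi.
set S := fun x => \sum_(j < K) expR (a j phi x / tau).
have S0 x : 0 < S x.
  rewrite /S (bigD1 k) //= ltr_pwDl ?expR_gt0 //.
  by apply: sumr_ge0 => j _; rewrite expR_ge0.
have p0 j x : 0 <= p j x.
  by rewrite /p /softmax_gate divr_ge0 ?expR_ge0 //; exact/ltW/(S0 x).
have p1 x : \sum_(j < K) p j x = 1.
  rewrite /p /softmax_gate -mulr_suml -/(S x) divff //; exact: lt0r_neq0.
have mS : measurable_fun setT S.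
  apply: measurable_sum => j; apply: measurableT_comp; first exact: measurable_expR.
  by apply: measurable_funM => //; exact: measurable_cst.
have mp j : measurable_fun setT (p j).
  rewrite (_ : p j = fun x => expR (a j phi x / tau) * expR (- ln (S x))); last first.
    apply/funext => x; rewrite /p /softmax_gate expRN lnK //; exact: S0.
  apply: measurable_funM.
    apply: measurableT_comp; first exact: measurable_expR.
    by apply: measurable_funM => //; exact: measurable_cst.
  apply: measurableT_comp; first exact: measurable_expR.
  apply: measurableT_comp => //; apply: measurableT_comp => //; exact: measurable_ln.
have mlt (g : T -> R) c : measurable_fun setT g -> measurable [set x | c < g x].
  move=> mg; rewrite (_ : [set x | c < g x] = setT `&` g @^-1` `]c, +oo[).
    exact: mg.
  by rewrite setTI; apply/seteqP; split => x /=; rewrite in_itv /= andbT.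
have mle (g : T -> R) c : measurable_fun setT g -> measurable [set x | c <= g x].
  move=> mg; rewrite (_ : [set x | c <= g x] = setT `&` g @^-1` `[c, +oo[).
    exact: mg.
  by rewrite setTI; apply/seteqP; split => x /=; rewrite in_itv /= andbT.
have mA : measurable A.
  apply: measurableI; first apply: measurableI; [exact: mO| |exact: mle].
  rewrite (_ : confident_set _ _ _ _ = \bigcup_(j in [set: 'I_K]) [set x | 1 - eps < p j x]).
    by apply: fin_bigcup_measurable => // j _; exact: mlt.
  by apply/seteqP; split => x /= [j]; [exists j|move=> _; exists j].
have mmu : measurable_fun setT mu.
  apply: measurable_sum => j; apply: measurable_funM => //; exact: measurable_indic.
have mh : measurable_fun setT h.
  by apply: measurable_sum => j; apply: measurable_funM.
set c := 4 * Bstu ^+ 2 * eps ^+ 2.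
have pw x : A x -> (forall j, j != k -> ~ (Omega k x /\ Omega j x)) ->
    2^-1 * `|f k (theta k) x - fstar k x| ^+ 2 <= (mu x - h x) ^+ 2 + c.
  move=> [[Ok _] pk] nO.
  have Bs : 0 <= Bstu := le_trans (normr_ge0 _) (fB k (theta k) x).
  have mux : mu x = fstar k x.
    rewrite /mu /piecewise_target (bigD1 k) //= indicE mem_set // mul1r big1 ?addr0 //.
    move=> j jk; rewrite indicE memNset ?mul0r // => Oj; exact: (nO j jk).
  have hx : h x - f k (theta k) x = \sum_(j < K) p j x * (f j (theta j) x - f k (theta k) x).
    have -> : \sum_(j < K) p j x * (f j (theta j) x - f k (theta k) x) =
      \sum_(j < K) p j x * f j (theta j) x - \sum_(j < K) p j x * f k (theta k) x.
      by rewrite -sumrB; apply: eq_bigr => j _; rewrite mulrBr.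
    by rewrite -mulr_suml p1 mul1r.
  have hb : `|h x - f k (theta k) x| <= 2 * Bstu * eps.
    rewrite hx (bigD1 k) //= subrr mulr0 add0r.
    apply: le_trans (ler_norm_sum _ _ _) _.
    apply: (@le_trans _ _ (\sum_(j < K | j != k) p j x * (2 * Bstu))).
      apply: ler_sum => j _; rewrite normrM ger0_norm // ler_wpM2l //.
      apply: le_trans (ler_normB _ _) _.
      have := fB j (theta j) x; have := fB k (theta k) x; lra.
    rewrite -mulr_suml.
    have := p1 x; rewrite (bigD1 k) //= => e.
    have : \sum_(j < K | j != k) p j x = 1 - p k x by rewrite -e; ring.
    move=> ->; rewrite [X in X <= _]mulrC; apply: ler_wpM2l.
      by rewrite mulr_ge0.
    have pk' : 1 - eps <= softmax_gate a tau phi k x := pk.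
    rewrite /p; lra.
  rewrite mux real_normK ?num_real //.
  have := real_normK (num_real (h x - f k (theta k) x)).
  have := normr_ge0 (h x - f k (theta k) x).
  set w := h x - f k (theta k) x.
  have w2 : w ^+ 2 <= (2 * Bstu * eps) ^+ 2.
    rewrite -real_normK ?num_real //; apply: lerXn2r => //; rewrite ?nnegrE //.
    by rewrite mulr_ge0 ?mulr_ge0 // ltW.
  have := sqr_ge0 (fstar k x - f k (theta k) x - 2 * w).
  rewrite /c /w in w2 *; move=> Hs _ _.
  nra.
have aeN : \forall x \ae P, forall j, j != k -> ~ (Omega k x /\ Omega j x).
  apply: filter_forall => j.
  have [->|jk] := eqVneq j k; first by apply: nearW.
  have kj : k != j by rewrite eq_sym.
  apply: negligibleS (negO k j kj).
  move=> x /= H; apply: contrapT => H'; apply: H => _ H''; exact: H' H''.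
have mF : measurable_fun A (fun x => ((mu x - h x) ^+ 2)%:E).
  apply/measurable_EFinP; apply: measurable_funTS; apply: measurable_funX.
  exact: measurable_funB.
have mG : measurable_fun A (fun x => (`|f k (theta k) x - fstar k x| ^+ 2)%:E).
  apply/measurable_EFinP; apply: measurable_funTS; apply: measurable_funX.
  apply: measurableT_comp => //; exact: measurable_funB.
have F0 : forall x, A x -> (0 <= ((mu x - h x) ^+ 2)%:E)%E.
  by move=> x _; rewrite lee_fin sqr_ge0.
have G0 : forall x, A x -> (0 <= (`|f k (theta k) x - fstar k x| ^+ 2)%:E)%E.
  by move=> x _; rewrite lee_fin sqr_ge0.
have c0 : 0 <= c by rewrite /c; apply: mulr_ge0; [apply: mulr_ge0|]; rewrite ?sqr_ge0.
have h2 : (0:R) <= 2^-1 by rewrite invr_ge0.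
have E1 := ge0_integralZl_EFin P mA G0 mG h2.
have E2 : (\int[P]_(x in A) (((mu x - h x) ^+ 2)%:E + c%:E) =
    \int[P]_(x in A) ((mu x - h x) ^+ 2)%:E + c%:E * P A)%E.
  rewrite ge0_integralD //; last first.
  all: try (by move=> x _; rewrite lee_fin).
  all: try exact: measurable_cst.
  by rewrite integral_cst.
have key : ((2^-1)%:E * \int[P]_(x in A) (`|f k (theta k) x - fstar k x| ^+ 2)%:E <=
    \int[P]_(x in A) ((mu x - h x) ^+ 2)%:E + c%:E * P A)%E.
  rewrite -E1 -E2.
  apply: ae_ge0_le_integral => //.
  - exact: measurable_funeM.
  - by move=> x Ax /=; rewrite adde_ge0 ?lee_fin ?sqr_ge0.
  - by apply: emeasurable_funD => //; exact: measurable_cst.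
  - apply: filterS aeN => x nO Ax; rewrite -EFinM -EFinD lee_fin; exact: pw.
rewrite leeBlDr; first exact: key.
by rewrite fin_numM // fin_num_measure.
Qed.
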